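(* Let $n$ be a positive integer, $0\le m\le\lfloor n/2\rfloor$ and $0\le k\le m$. Let $M^{(n-m,m)}$ be the complex vector space with basis $\{e_\sigma\}$ indexed by the $m$-element subsets $\sigma$ of $\{1,\dots,n\}$, and let $\Omega=\{n-m+1,\dots,n\}$. Define the linear map $\pi:\mathbb{C}[S_n]\to M^{(n-m,m)}$ by $\pi(g)=e_{g(\Omega)}$ for $g\in S_n$. Let $T_k$ be the Young tableau of shape $(n-k,k)$ whose first row contains $1,\dots,n-k$ and whose second row contains $n-k+1,\dots,n$, with row subgroup $R(T_k)$ and column subgroup $C(T_k)$, and let $$c_k=\Big(\sum_{q\in C(T_k)}\operatorname{sgn}(q)\,q\Big)\Big(\sum_{p\in R(T_k)}p\Big)\in\mathbb{C}[S_n].$$ Then the coefficient of $e_\Omega$ in $\pi(c_k)$ is $(m-k)!\,k!\,(n-m)!$.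
   Context: The row subgroup $R(T_k)$ (resp. column subgroup $C(T_k)$) consists of the permutations of $\{1,\dots,n\}$ that preserve each row (resp. each column) of $T_k$ as a set. Products in the group ring are composition of permutations, $qp=q\circ p$. *)

(* Defs.v *)
(* Points {1,...,n} are modelled 0-based as 'I_n. *)
From HB Require Import structures.
From mathcomp Require Import all_boot all_order all_algebra all_fingroup all_field.
Set Implicit Arguments. Unset Strict Implicit. Unset Printing Implicit Defensive.
Import GRing.Theory.
Local Open Scope ring_scope.

Notation grpring n := {ffun {perm 'I_n} -> algC}.

Definition gr_of n (g : {perm 'I_n}) : grpring n := [ffun h => (h == g)%:R].

(* Paper's composition q p = q \o p.  In mathcomp (y * x)%g is "first y then x",
   i.e. (y * x)%g = x \o y. *)
Definition compose n (x y : {perm 'I_n}) : {perm 'I_n} := (y * x)%g.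

Definition gr_mul n (a b : grpring n) : grpring n :=
  [ffun g => \sum_(x : {perm 'I_n}) \sum_(y : {perm 'I_n} | compose x y == g) a x * b y].

Definition sgn n (q : {perm 'I_n}) : algC := (-1) ^+ odd_perm q.

(* Omega = {n-m+1,...,n}, 0-based {n-m,...,n-1} *)
Definition Omega n m : {set 'I_n} := [set i : 'I_n | n - m <= i]%N.

(* M^(n-m,m): coordinates indexed by subsets (only m-subsets ever occur);
   piM is the linear extension of g |-> e_{g(Omega)}. *)
Definition piM n m (a : grpring n) : {ffun {set 'I_n} -> algC} :=
  [ffun s : {set 'I_n} => \sum_(g : {perm 'I_n}) a g * ((g @: Omega n m) == s)%:R].

Definition preserves_blocks n (lab : 'I_n -> nat) : {set {perm 'I_n}} :=
  [set s : {perm 'I_n} | [forall i : 'I_n,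
     s @: [set x : 'I_n | lab x == lab i] == [set x : 'I_n | lab x == lab i]]].

(* Tableau T_k of shape (n-k,k): row 1 = {1..n-k}, row 2 = {n-k+1..n}.
   0-based: entry i lies in row (i >= n-k) and in column i (row 1) or
   i - (n-k) (row 2). *)
Definition Trow n k (i : 'I_n) : nat := if (i < n - k)%N then 0%N else 1%N.
Definition Tcol n k (i : 'I_n) : nat := if (i < n - k)%N then (i : nat) else (i - (n - k))%N.

Definition RT n k := preserves_blocks (@Trow n k).
Definition CT n k := preserves_blocks (@Tcol n k).

Definition gr_scale n (c : algC) (a : grpring n) : grpring n := [ffun h => c * a h].

Definition c_elt n k : grpring n :=
  gr_mul (\sum_(q in CT n k) gr_scale (sgn q) (gr_of q)) (\sum_(p in RT n k) gr_of p).

(* Main.v *)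
Require Import Defs.
From mathcomp Require Import all_boot all_order all_algebra all_fingroup all_field.
From mathcomp Require Import zify.
Set Implicit Arguments. Unset Strict Implicit. Unset Printing Implicit Defensive.
Import GRing.Theory.

Lemma stab_mem (T : finType) (y : {perm T}) (S : {set T}) x : y @: S = S -> (y x \in S) = (x \in S).
Proof.
move=> yS; apply/idP/idP => [|xS]; last by rewrite -yS imset_f.
by rewrite -{1}yS => /imsetP [w wS /perm_inj ->].
Qed.

Lemma stab_of (T : finType) (y : {perm T}) (S : {set T}) : (forall x, (y x \in S) = (x \in S)) -> y @: S = S.
Proof.
move=> H; apply/setP=> z; apply/imsetP/idP => [[w wS ->]|zS]; first by rewrite H.
by exists ((y^-1)%g z); rewrite ?permKV // -H permKV.
Qed.

Lemma stabC (T : finType) (y : {perm T}) (S : {set T}) : y @: S = S -> y @: (~: S) = ~: S.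
Proof. by move=> yS; apply: stab_of => x; rewrite !inE (stab_mem _ yS). Qed.

Lemma card_stab3 (T : finType) (A C : {set T}) : [disjoint A & C] ->
 #|[set y : {perm T} | (y @: A == A) && (y @: C == C)]| = (#|A|`! * #|C|`! * #|~: (A :|: C)|`!)%N.
Proof.
move=> dAC.
set D := ~: (A :|: C).
have nAC z : z \in A -> z \notin C.
  by move=> zA; apply: contraT; rewrite negbK => zC; move: dAC; rewrite disjoints_subset => /subsetP /(_ z zA); rewrite inE zC.
have nAD z : z \in A -> z \notin D by move=> zA; rewrite !inE zA.
have nCD z : z \in C -> z \notin D by move=> zC; rewrite !inE zC orbT.
have nCA z : z \in C -> z \notin A by move=> zC; apply: contraT; rewrite negbK => /nAC; rewrite zC.
pose F (t : {perm T} * {perm T} * {perm T}) := (t.1.1 * t.1.2 * t.2)%g.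
pose X := setX (setX (Sym A) (Sym C)) (Sym D).
have evA t z : t \in X -> z \in A -> F t z = t.1.1 z.
  case: t => [[a c] d] tX zA; move: tX; rewrite !inE /= => /andP [/andP [aA cC] dD].
  rewrite /F /= !permM (out_perm cC) ?(out_perm dD) //.
    by apply: nAD; rewrite (perm_closed _ aA).
  by apply: nAC; rewrite (perm_closed _ aA).
have evC t z : t \in X -> z \in C -> F t z = t.1.2 z.
  case: t => [[a c] d] tX zC; move: tX; rewrite !inE /= => /andP [/andP [aA cC] dD].
  rewrite /F /= !permM (out_perm aA) ?(nCA _ zC) // (out_perm dD) //.
  by apply: nCD; rewrite (perm_closed _ cC).
have evD t z : t \in X -> z \in D -> F t z = t.2 z.
  case: t => [[a c] d] tX zD; move: tX; rewrite !inE /= => /andP [/andP [aA cC] dD].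
  have zA : z \notin A by apply: contraT; rewrite negbK => /nAD; rewrite zD.
  have zC : z \notin C by apply: contraT; rewrite negbK => /nCD; rewrite zD.
  by rewrite /F /= !permM (out_perm aA) // (out_perm cC).
have cover z : [\/ z \in A, z \in C | z \in D].
  rewrite !inE; case: (z \in A) => /=; first by constructor 1.
  by case: (z \in C) => /=; [constructor 2 | constructor 3].
have -> : [set y : {perm T} | (y @: A == A) && (y @: C == C)] = F @: X.
  apply/setP => y; rewrite inE; apply/andP/imsetP.
    move=> [/eqP yA /eqP yC].
    have yD : y @: D = D by apply: stabC; rewrite imsetU yA yC.
    have nA : y \in ('N(A | 'P))%g by apply/astabsP => x; rewrite /= (stab_mem _ yA).
    have nC : y \in ('N(C | 'P))%g by apply/astabsP => x; rewrite /= (stab_mem _ yC).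
    have nD : y \in ('N(D | 'P))%g by apply/astabsP => x; rewrite /= (stab_mem _ yD).
    have tX : (restr_perm A y, restr_perm C y, restr_perm D y) \in X.
      by rewrite !inE /= !restr_perm_on.
    exists (restr_perm A y, restr_perm C y, restr_perm D y) => //.
    apply/permP => z; case: (cover z) => zS.
    - by rewrite (evA _ _ tX zS) /= restr_permE.
    - by rewrite (evC _ _ tX zS) /= restr_permE.
    - by rewrite (evD _ _ tX zS) /= restr_permE.
  move=> [t tX ->]; split; apply/eqP/stab_of => x.
    case: (cover x) => xS.
    - by rewrite (evA _ _ tX xS) xS; case: t tX => [[a c] d]; rewrite !inE /= => /andP [/andP [aA _] _]; rewrite (perm_closed _ aA).
    - rewrite (evC _ _ tX xS) (negPf (nCA _ xS)); case: t tX => [[a c] d]; rewrite !inE /= => /andP [/andP [_ cC] _].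
      by apply/negP => /nAC; rewrite (perm_closed _ cC) xS.
    - rewrite (evD _ _ tX xS); case: t tX => [[a c] d]; rewrite !inE /= => /andP [/andP [_ _] dD].
      have : d x \in D by rewrite (perm_closed _ dD).
      by rewrite !inE negb_or => /andP [/negPf -> _]; move: xS; rewrite !inE negb_or => /andP [/negPf -> _].
  case: (cover x) => xS.
  - rewrite (evA _ _ tX xS) (negPf (nAC _ xS)); case: t tX => [[a c] d]; rewrite !inE /= => /andP [/andP [aA _] _].
    by apply/negP => /nCA; rewrite (perm_closed _ aA) xS.
  - by rewrite (evC _ _ tX xS) xS; case: t tX => [[a c] d]; rewrite !inE /= => /andP [/andP [_ cC] _]; rewrite (perm_closed _ cC).
  - rewrite (evD _ _ tX xS); case: t tX => [[a c] d]; rewrite !inE /= => /andP [/andP [_ _] dD].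
    have : d x \in D by rewrite (perm_closed _ dD).
    by rewrite !inE negb_or => /andP [_ /negPf ->]; move: xS; rewrite !inE negb_or => /andP [_ /negPf ->].
rewrite card_in_imset; first by rewrite !cardsX !card_Sym.
move=> t1 t2 t1X t2X eqF.
have eqP1 (P : {set T}) (g : {perm T} * {perm T} * {perm T} -> {perm T}) :
   (forall t, t \in X -> perm_on P (g t)) ->
   (forall t z, t \in X -> z \in P -> F t z = g t z) -> g t1 = g t2.
  move=> gP gF; apply/permP => z; case: (boolP (z \in P)) => zP.
    by rewrite -!gF // eqF.
  by rewrite !(out_perm (gP _ _)).
have onX t : t \in X -> [/\ perm_on A t.1.1, perm_on C t.1.2 & perm_on D t.2].
  by case: t => [[a c] d]; rewrite !inE /= => /andP [/andP [? ?] ?].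
have h1 := eqP1 A (fun t => t.1.1) (fun t tX => let: And3 h _ _ := onX t tX in h) evA.
have h2 := eqP1 C (fun t => t.1.2) (fun t tX => let: And3 _ h _ := onX t tX in h) evC.
have h3 := eqP1 D (fun t => t.2) (fun t tX => let: And3 _ _ h := onX t tX in h) evD.
clear eqP1 eqF.
move: t1 t2 t1X t2X h1 h2 h3 => [[a1 c1] d1] [[a2 c2] d2] _ _ /= -> -> -> //.
Qed.
Lemma card_lt (n a : nat) : (a <= n)%N -> #|[set i : 'I_n | (i < a)%N]| = a.
Proof.
move=> h.
have -> : [set i : 'I_n | (i < a)%N] = widen_ord h @: [set: 'I_a].
  apply/setP => i; rewrite inE; apply/idP/imsetP => [ia|[j _ ->]] //=.
  by exists (Ordinal ia); rewrite ?inE //; apply: val_inj.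
have inj : injective (widen_ord h) by move=> x y /(congr1 val) /= /val_inj.
by rewrite (card_imset _ inj) cardsT card_ord.
Qed.

Lemma card_ge (n a : nat) : (a <= n)%N -> #|[set i : 'I_n | (a <= i)%N]| = (n - a)%N.
Proof.
move=> h.
have -> : [set i : 'I_n | (a <= i)%N] = ~: [set i : 'I_n | (i < a)%N].
  by apply/setP => i; rewrite !inE -leqNgt.
by rewrite cardsCs setCK card_lt // card_ord.
Qed.

Local Open Scope ring_scope.
Lemma sum_exch n (F : {perm 'I_n} -> {perm 'I_n} -> algC) (e : {perm 'I_n} -> algC) :
  \sum_g (\sum_x \sum_(y | compose x y == g) F x y) * e g
  = \sum_x \sum_y F x y * e (compose x y).
Proof.
under eq_bigr => g _ do rewrite big_distrl /=.
rewrite exchange_big /=; apply: eq_bigr => x _.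
under eq_bigr => g _ do rewrite big_distrl /= big_mkcond /=.
rewrite exchange_big /=; apply: eq_bigr => y _.
by rewrite -big_mkcond /= (big_pred1 (compose x y)) // => g; rewrite /= eq_sym.
Qed.
Lemma key n m k (x y : {perm 'I_n}) : (k <= n - m)%N -> (k <= m)%N ->
  x \in CT n k -> y \in RT n k -> (y * x)%g @: Omega n m == Omega n m -> x = 1%g.
Proof.
move=> hk hkm xC yR /eqP hO.
apply/permP => i; rewrite perm1; apply/eqP; apply: contraT => xi.
have colx z : Tcol k (x z) = Tcol k z.
  move: xC; rewrite inE => /forallP /(_ z) /eqP H.
  have : x z \in x @: [set w | Tcol k w == Tcol k z] by apply: imset_f; rewrite inE.
  by rewrite H inE => /eqP.
have rowy z : exists2 w, y w = z & Trow k w = Trow k z.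
  move: yR; rewrite inE => /forallP /(_ z) /eqP H.
  have : z \in [set w | Trow k w == Trow k z] by rewrite inE.
  by rewrite -H => /imsetP [w]; rewrite inE => /eqP wz zw; exists w.
have [j jge xj] : exists2 j : 'I_n, (n - k <= j)%N & x j != j.
  case: (leqP (n-k) i) => hi; first by exists i.
  exists (x i); last by apply: contra xi => /eqP /perm_inj ->.
  have := colx i; rewrite /Tcol hi; case: ifPn => [_ e|]; last by rewrite -leqNgt.
  by case/eqP: xi; apply: val_inj.
have xjk : (x j < k)%N.
  have := colx j; rewrite /Tcol (ltnNge j) jge /=.
  have := ltn_ord j; have := ltn_ord (x j).
  case: ifPn => h1 h2 h3 e; first by lia.
  case/eqP: xj; apply: val_inj => /=; lia.
have [w yw rw] := rowy j.
move: rw; rewrite /Trow (ltnNge j) jge /=; case: ifPn => // hw _.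
have : (y * x)%g w \in Omega n m by rewrite -hO; apply: imset_f; rewrite inE; lia.
rewrite permM yw inE; lia.
Qed.

Lemma blockR n k (i : 'I_n) :
  [set x : 'I_n | Trow k x == Trow k i] =
  if (n - k <= i)%N then [set x : 'I_n | (n - k <= x)%N] else ~: [set x : 'I_n | (n - k <= x)%N].
Proof.
apply/setP => z; rewrite /Trow; case: (leqP (n - k) i) => hi; rewrite !inE ltnNge;
  case: (leqP (n - k) z) => //=; rewrite ?hi //=; by rewrite leqNgt hi.
Qed.

Lemma RT_eq n k (y : {perm 'I_n}) :
  (y \in RT n k) = (y @: [set x : 'I_n | (n - k <= x)%N] == [set x : 'I_n | (n - k <= x)%N]).
Proof.
rewrite inE; apply/forallP/eqP => [H|yC i].
  case: (set_0Vmem [set x : 'I_n | (n - k <= x)%N]) => [->|[i iC]]; first by rewrite imset0.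
  have := H i; rewrite blockR; move: iC; rewrite inE => -> /eqP //.
rewrite blockR; case: ifP => _; first by rewrite yC.
by rewrite stabC.
Qed.

Lemma one_CT n k : (1%g : {perm 'I_n}) \in CT n k.
Proof. by rewrite inE; apply/forallP => i; apply/eqP/stab_of => z; rewrite perm1. Qed.

Theorem lemma5 (n m k : nat) (hn : (0 < n)%N) (hm : (m <= n./2)%N) (hk : (k <= m)%N) :
  piM m (c_elt n k) (Omega n m) = ((m - k)`! * k`! * (n - m)`!)%:R.
Proof.
have hkm' : (k <= n - m)%N by lia.
rewrite /piM ffunE /c_elt /gr_mul.
under eq_bigr => g _ do rewrite ffunE.
rewrite sum_exch.
have Ax x : (\sum_(q in CT n k) gr_scale (sgn q) (gr_of q)) x = sgn x * (x \in CT n k)%:R.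
  rewrite sum_ffunE; under eq_bigr => q _ do rewrite !ffunE.
  case: (boolP (x \in CT n k)) => xC.
    rewrite (bigD1 x) //= eqxx mulr1 big1 ?addr0 // => q /andP [_ /negPf].
    by rewrite eq_sym => ->; rewrite mulr0.
  rewrite mulr0 big1 // => q qC.
  have : x != q by apply: contraNneq xC => ->.
  by move/negPf->; rewrite mulr0.
have By y : (\sum_(p in RT n k) gr_of p) y = (y \in RT n k)%:R.
  rewrite sum_ffunE; under eq_bigr => q _ do rewrite !ffunE.
  case: (boolP (y \in RT n k)) => yR.
    rewrite (bigD1 y) //= eqxx big1 ?addr0 // => q /andP [_ /negPf].
    by rewrite eq_sym => ->.
  rewrite big1 // => q qC.
  have : y != q by apply: contraNneq yR => ->.
  by move/negPf->.
under eq_bigr => x _ do under eq_bigr => y _ do rewrite Ax By.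
rewrite (bigD1 1%g) //=.
rewrite [X in _ + X]big1 ?addr0; last first.
  move=> x x1; apply: big1 => y _.
  case: (boolP (x \in CT n k)) => xC; last by rewrite mulr0 !mul0r.
  case: (boolP (y \in RT n k)) => yR; last by rewrite mulr0 mul0r.
  case: (boolP (compose x y @: Omega n m == Omega n m)) => h; last by rewrite mulr0.
  by move: x1; rewrite (key hkm' hk xC yR h) eqxx.
rewrite /sgn odd_perm1 expr0 mul1r one_CT.
under eq_bigr => y _ do rewrite (_ : true%:R = 1 :> algC) // mul1r /compose mulg1 -natrM.
rewrite -natr_sum; congr (_%:R).
set C := [set x : 'I_n | (n - k <= x)%N].
have cnt : (\sum_y ((y \in RT n k) * (y @: Omega n m == Omega n m)))%N
   = #|[set y : {perm 'I_n} | (y @: (~: Omega n m) == ~: Omega n m) && (y @: C == C)]|.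
  rewrite -sum1_card [RHS]big_mkcond; apply: eq_bigr => y _; rewrite inE RT_eq.
  have -> : (y @: Omega n m == Omega n m) = (y @: (~: Omega n m) == ~: Omega n m).
    by apply/eqP/eqP => /stabC //; rewrite !setCK.
  by case: (_ == _); case: (_ == _).
have CO : C \subset Omega n m by apply/subsetP => z; rewrite !inE; lia.
rewrite cnt card_stab3; last by rewrite disjoints_subset setCS.
have cO : #|Omega n m| = m by rewrite /Omega card_ge; lia.
have cCO : #|~: Omega n m| = (n - m)%N by rewrite cardsCs setCK card_ord cO.
have cC : #|C| = k by rewrite /C card_ge; lia.
have cD : #|~: (~: Omega n m :|: C)| = (m - k)%N.
  rewrite setCU setCK -setDE.
  have := cardsID C (Omega n m); rewrite (setIidPr CO) cC cO => e; by rewrite -[in RHS]e addKn.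
rewrite cCO cC cD; lia.
Qed.
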